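(* Let $k\ge 3$ be odd and let $G$ be a $k$-uniform hypercycle of size $r\ge 2$, with Laplacian tensor $\mathcal L$. Then $\lambda(\mathcal L)=2$.
   Context: A $k$-uniform hypercycle of size $d$ has vertex set $\{i_{j,s}: j\in[d], s\in[k-1]\}$ (all distinct) and edge set $\{\{i_{j,1},\ldots,i_{j,k-1},i_{j+1,1}\}: j\in[d]\}$ where $i_{d+1,1}:=i_{1,1}$. For a $k$-uniform hypergraph $G=(V,E)$ with $V=[n]$ and $d_i$ the number of edges containing $i$, the Laplacian tensor $\mathcal L=\mathcal D-\mathcal A$ ($\mathcal D$ diagonal with entries $d_i$, $\mathcal A$ with entries $\frac1{(k-1)!}$ at index tuples forming an edge and $0$ otherwise) satisfies $(\mathcal L\mathbf x^{k-1})_i=d_ix_i^{k-1}-\sum_{e\in E,\,i\in e}\prod_{s\in e\setminus\{i\}}x_s$. A real $\lambda$ is an H-eigenvalue of $\mathcal L$ if some nonzero $\mathbf x\in\mathbb R^n$ satisfies $(\mathcal L\mathbf x^{k-1})_i=\lambda x_i^{k-1}$ for all $i$; $\lambda(\mathcal L)$ is the largest H-eigenvalue. *)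

(* Defs.v *)
From HB Require Import structures.
From mathcomp Require Import all_boot all_order all_algebra.
From mathcomp Require Import reals.
Set Implicit Arguments. Unset Strict Implicit. Unset Printing Implicit Defensive.
Import Order.TTheory GRing.Theory Num.Theory.
Local Open Scope ring_scope.

Definition hdeg (V : finType) (E : {set {set V}}) (i : V) : nat :=
  #|[set e in E | i \in e]|.

(* (L x^{k-1})_i = d_i x_i^{k-1} - sum_{e in E, i in e} prod_{s in e \ i} x_s *)
Definition lap_apply (R : realType) (k : nat) (V : finType)
  (E : {set {set V}}) (x : V -> R) (i : V) : R :=
  (hdeg E i)%:R * x i ^+ k.-1
  - \sum_(e in E | i \in e) \prod_(s in e :\ i) x s.

Definition is_H_eigenvalue (R : realType) (k : nat) (V : finType)
  (E : {set {set V}}) (lambda : R) : Prop :=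
  exists x : V -> R, (exists i, x i != 0) /\
    forall i, lap_apply k E x i = lambda * x i ^+ k.-1.

Definition is_largest_H_eigenvalue (R : realType) (k : nat) (V : finType)
  (E : {set {set V}}) (lambda : R) : Prop :=
  is_H_eigenvalue k E lambda /\
  forall mu : R, is_H_eigenvalue k E mu -> mu <= lambda.

(* The k-uniform hypercycle of size r: vertices i_{j,s} = (j, s) with
   j : 'I_r, s : 'I_(k-1); edge j = {i_{j,1},...,i_{j,k-1}, i_{j+1,1}}
   (indices shifted to start at 0, j+1 taken cyclically). *)
Definition hypercycle_edge (r k : nat) (j : 'I_r) : {set 'I_r * 'I_k.-1} :=
  [set v : 'I_r * 'I_k.-1 |
     (v.1 == j) || ((v.1 == ordS j) && (nat_of_ord v.2 == 0%N))].

Definition hypercycle (r k : nat) : {set {set 'I_r * 'I_k.-1}} :=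
  [set hypercycle_edge k j | j : 'I_r].

(* Main.v *)
Require Import Defs.
From HB Require Import structures.
From mathcomp Require Import all_boot all_order all_algebra.
From mathcomp Require Import reals.
From mathcomp Require Import ring lra zify.
Set Implicit Arguments. Unset Strict Implicit. Unset Printing Implicit Defensive.
Import Order.TTheory GRing.Theory Num.Theory Num.Def.
Local Open Scope ring_scope.

Lemma mem_edge r k (j : 'I_r) (v : 'I_r * 'I_k.-1) :
  (v \in hypercycle_edge k j) = (v.1 == j) || ((v.1 == ordS j) && (v.2 == 0 :> nat)).
Proof. by rewrite inE. Qed.

Lemma ordS_neq r (j : 'I_r) : (1 < r)%N -> ordS j != j.
Proof.
move=> hr; apply/eqP => /(congr1 val) /=.
have hj := ltn_ord j.
case: (ltngtP j.+1 r) => h.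
- by rewrite modn_small //; lia.
- lia.
- rewrite h modnn; lia.
Qed.

Lemma ord_pred_neq r (j : 'I_r) : (1 < r)%N -> ord_pred j != j.
Proof.
move=> hr; apply/eqP => E; have := ordS_neq j hr.
by rewrite -{1}E ord_predK eqxx.
Qed.

Lemma edge_inj r k : (2 < k)%N -> injective (@hypercycle_edge r k).
Proof.
move=> hk j j' E.
have hm : (k.-2 < k.-1)%N by lia.
have : (j, Ordinal hm) \in hypercycle_edge k j by rewrite mem_edge eqxx.
rewrite E mem_edge /= => /orP [/eqP // | /andP [_ /eqP h]]; lia.
Qed.

Lemma big_hc r k (R : Type) (idx : R) (op : Monoid.com_law idx)
  (v : 'I_r * 'I_k.-1) (F : {set 'I_r * 'I_k.-1} -> R) :
  (2 < k)%N ->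
  \big[op/idx]_(e in hypercycle r k | v \in e) F e =
  \big[op/idx]_(j | v \in hypercycle_edge k j) F (hypercycle_edge k j).
Proof.
move=> hk; rewrite big_imset_cond; last by move=> a b _ _; apply: edge_inj.
by apply: eq_bigl.
Qed.

Lemma hdeg_hc r k (v : 'I_r * 'I_k.-1) : (2 < k)%N ->
  hdeg (hypercycle r k) v = (\sum_(j | v \in hypercycle_edge k j) 1)%N.
Proof.
move=> hk; rewrite /hdeg -sum1_card.
rewrite (eq_bigl (fun e => (e \in hypercycle r k) && (v \in e))) => [|e]; last by rewrite inE.
exact: big_hc.
Qed.

Lemma pred_edge0 r k (j j' : 'I_r) (s : 'I_k.-1) : val s = 0%N ->
  ((j, s) \in hypercycle_edge k j') = (j' == j) || (j' == ord_pred j).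
Proof.
move=> hs; rewrite mem_edge /= hs eqxx andbT; congr orb; first by rewrite eq_sym.
by rewrite eq_sym (can2_eq (@ordSK r) (@ord_predK r)).
Qed.

Lemma pred_edge1 r k (j j' : 'I_r) (s : 'I_k.-1) : val s != 0%N ->
  ((j, s) \in hypercycle_edge k j') = (j' == j).
Proof. by move=> hs; rewrite mem_edge /= (negbTE hs) andbF orbF eq_sym. Qed.

Lemma big2 (I : finType) (R : Type) (idx : R) (op : Monoid.com_law idx) (a b : I) (F : I -> R) :
  a != b -> \big[op/idx]_(j | (j == a) || (j == b)) F j = op (F a) (F b).
Proof.
move=> ab; rewrite (bigD1 a) ?eqxx //=; congr (op _ _).
rewrite (eq_bigl (pred1 b)) ?big_pred1_eq // => j /=.
by case: (eqVneq j a) => [->|ja] /=; [rewrite (negbTE ab) | rewrite andbT].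
Qed.

Lemma lap_mul (R : realType) k (V : finType) (E : {set {set V}}) (x : V -> R) i :
  (0 < k)%N -> x i * lap_apply k E x i =
  (hdeg E i)%:R * x i ^+ k - \sum_(e in E | i \in e) \prod_(s in e) x s.
Proof.
move=> k0; rewrite /lap_apply mulrBr mulr_sumr; congr (_ - _).
  by rewrite mulrCA -exprS prednK.
apply: eq_bigr => e /andP[_ ie]; by rewrite (big_setD1 i ie).
Qed.

Lemma sgX_odd (R : realDomainType) n (y : R) : odd n -> Num.sg (y ^+ n) = Num.sg y.
Proof.
move=> on; rewrite sgrX; have [->|y0] := eqVneq y 0.
  by rewrite sgr0 expr0n; case: n on.
by rewrite sgr_odd // on expr1.
Qed.

Lemma odd_inj (R : realDomainType) n (a b : R) : odd n -> a ^+ n = b ^+ n -> a = b.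
Proof.
move=> on E.
have sgE : Num.sg a = Num.sg b by rewrite -(sgX_odd a on) -(sgX_odd b on) E.
have n0 : (0 < n)%N by case: n on E.
have nE : `|a| = `|b|.
  by apply/eqP; rewrite -(eqrXn2 n0) ?normr_ge0 // -!normrX E.
by rewrite (numEsg a) (numEsg b) sgE nE.
Qed.

Lemma sg_opp_of_neg (R : realDomainType) (a b : R) : a * b < 0 -> Num.sg a + Num.sg b = 0.
Proof.
case: (ltrgt0P a) => ha; case: (ltrgt0P b) => hb;
  rewrite ?(gtr0_sg ha) ?(ltr0_sg ha) ?(gtr0_sg hb) ?(ltr0_sg hb) => h; try nra.
Qed.

Lemma prod0 (R : realType) (T : finType) (A : {set T}) (f : T -> R) u :
  u \in A -> f u = 0 -> \prod_(s in A) f s = 0.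
Proof. by move=> uA fu; rewrite (big_setD1 u uA) /= fu mul0r. Qed.

Theorem proposition4p1 (R : realType) (k r : nat) :
  (3 <= k)%N -> odd k -> (2 <= r)%N ->
  is_largest_H_eigenvalue (R := R) k (hypercycle r k) 2.
Proof.
move=> hk ok hr.
have hk2 : (2 < k)%N by [].
case: k hk ok hk2 => [|[|[|m]]] // _ ok hk2.
set E := hypercycle r m.+3.
have r0 : (0 < r)%N by apply: ltnW.
pose j0 : 'I_r := Ordinal r0.
have deg0 : forall (j : 'I_r) (s : 'I_m.+2), val s = 0%N -> hdeg E (j, s) = 2%N.
  move=> j s hs; rewrite /E hdeg_hc //.
  under eq_bigl do rewrite pred_edge0 //.
  by rewrite big2 // eq_sym ord_pred_neq.
have deg1 : forall (j : 'I_r) (s : 'I_m.+2), val s != 0%N -> hdeg E (j, s) = 1%N.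
  move=> j s hs; rewrite /E hdeg_hc //.
  under eq_bigl do rewrite pred_edge1 //.
  by rewrite big_pred1_eq.
have sum0 : forall (j : 'I_r) (s : 'I_m.+2) (G : {set 'I_r * 'I_m.+2} -> R), val s = 0%N ->
   \sum_(e in E | (j, s) \in e) G e = G (hypercycle_edge m.+3 j) + G (hypercycle_edge m.+3 (ord_pred j)).
  move=> j s G hs; rewrite /E big_hc //.
  under eq_bigl do rewrite pred_edge0 //.
  by rewrite big2 // eq_sym ord_pred_neq.
have sum1 : forall (j : 'I_r) (s : 'I_m.+2) (G : {set 'I_r * 'I_m.+2} -> R), val s != 0%N ->
   \sum_(e in E | (j, s) \in e) G e = G (hypercycle_edge m.+3 j).
  move=> j s G hs; rewrite /E big_hc //.
  under eq_bigl do rewrite pred_edge1 //.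
  by rewrite big_pred1_eq.
split.
  pose v0 : 'I_r * 'I_m.+2 := (j0, ord0).
  have maxn0 : (ord_max : 'I_m.+2) != ord0 by rewrite -val_eqE.
  exists (fun v => if v == v0 then 1 else 0); split.
    by exists v0; rewrite eqxx oner_neq0.
  move=> i; rewrite /lap_apply.
  have -> : \sum_(e in E | i \in e) \prod_(s in e :\ i) (if s == v0 then 1 else 0 : R) = 0.
    rewrite /E big_hc //; apply: big1 => j _.
    set e := hypercycle_edge m.+3 j.
    have ha : ((j, ord0) : 'I_r * 'I_m.+2) \in e by rewrite /e (mem_edge (k := m.+3)) eqxx.
    have hb : ((j, ord_max) : 'I_r * 'I_m.+2) \in e by rewrite /e (mem_edge (k := m.+3)) eqxx.
    have hc : ((ordS j, ord0) : 'I_r * 'I_m.+2) \in e by rewrite /e (mem_edge (k := m.+3)) /= !eqxx orbT.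
    suff [u [ue ui uv]] : exists u, [/\ u \in e, u != i & u != v0].
      apply: (prod0 (u := u)); first by rewrite in_setD1 ui ue.

      by rewrite (negbTE uv).
    case: (eqVneq ((j, ord_max) : 'I_r * 'I_m.+2) i) => bi.
    - case: (eqVneq ((j, ord0) : 'I_r * 'I_m.+2) v0) => av.
      + exists (ordS j, ord0); split => //.
          by rewrite -bi xpair_eqE negb_and eq_sym maxn0 orbT.
        by rewrite -av xpair_eqE negb_and ordS_neq.
      + exists (j, ord0); split => //.
        by rewrite -bi xpair_eqE negb_and eq_sym maxn0 orbT.
    - exists (j, ord_max); split => //.
      by rewrite /v0 xpair_eqE negb_and maxn0 orbT.
  rewrite subr0; case: (eqVneq i v0) => [->|iv].
    by rewrite deg0 // expr1n.
  by rewrite /= exprS mul0r !mulr0.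
move=> mu [x [[i0 xi0] eig]].
rewrite leNgt; apply/negP => hmu.
have eqv : forall v, (hdeg E v)%:R * x v ^+ m.+3 - \sum_(e in E | v \in e) \prod_(s in e) x s
    = mu * x v ^+ m.+3.
  by move=> v; rewrite -lap_mul // eig mulrCA -exprS.
pose Q j := \prod_(s in hypercycle_edge m.+3 j) x s.
have eqY : forall j, (2 - mu) * x (j, ord0) ^+ m.+3 = Q j + Q (ord_pred j).
  move=> j; have := eqv (j, ord0); rewrite deg0 // sum0 // => h.
  by rewrite mulrBl -h /Q; ring.
have eqI : forall j (s : 'I_m.+2), val s != 0%N -> (1 - mu) * x (j, s) ^+ m.+3 = Q j.
  move=> j s hs; have := eqv (j, s); rewrite deg1 // sum1 // => h.
  by rewrite mulrBl -h /Q; ring.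
have decQ : forall j, Q j = x (j, ord0) * (\prod_(t < m.+1) x (j, lift ord0 t)) * x (ordS j, ord0).
  move=> j.
  have -> : Q j = \prod_a \prod_(s : 'I_m.+2)
      (if ((a, s) : 'I_r * 'I_m.+2) \in hypercycle_edge m.+3 j then x (a, s) else 1).
    by rewrite pair_bigA /Q big_mkcond; apply: eq_bigr => -[a s].
  rewrite (bigD1 j) // (bigD1 (ordS j)) /=; last by rewrite ordS_neq.
  rewrite [X in _ * (_ * X)]big1; last first.
    move=> a /andP[aj aSj]; apply: big1 => s _.
    by rewrite (mem_edge (k := m.+3)) /= (negbTE aj) (negbTE aSj).
  have -> : \prod_(s : 'I_m.+2)
      (if ((j, s) : 'I_r * 'I_m.+2) \in hypercycle_edge m.+3 j then x (j, s) else 1)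
      = x (j, ord0) * \prod_(t < m.+1) x (j, lift ord0 t).
    by rewrite big_ord_recl (mem_edge (k := m.+3)) /= eqxx; congr (_ * _); apply: eq_bigr => t _;
      rewrite (mem_edge (k := m.+3)) /= eqxx.
  have -> : \prod_(s : 'I_m.+2)
      (if ((ordS j, s) : 'I_r * 'I_m.+2) \in hypercycle_edge m.+3 j then x (ordS j, s) else 1)
      = x (ordS j, ord0).
    rewrite big_ord_recl (mem_edge (k := m.+3)) /= !eqxx orbT /= big1 ?mulr1 // => t _.
    by rewrite (mem_edge (k := m.+3)) /= eqxx (negbTE (ordS_neq j hr)).
  by rewrite mulr1.
have tEq : forall j (u : 'I_m.+1), x (j, lift ord0 u) = x (j, lift ord0 ord0).
  move=> j u; apply: (odd_inj (n := m.+3)) => //.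
  have h1 : 1 - mu != 0 by apply/eqP => h; lra.
  by apply: (mulfI h1); rewrite !eqI.
have edge0 : forall j, Q j * (Num.sg (x (j, ord0)) + Num.sg (x (ordS j, ord0))) = 0.
  move=> j; have [->|Qn] := eqVneq (Q j) 0; first by rewrite mul0r.
  set t := x (j, lift ord0 ord0).
  have hQ : Q j = x (j, ord0) * t ^+ m.+1 * x (ordS j, ord0).
    by rewrite decQ; under eq_bigr do rewrite tEq; rewrite prodr_const card_ord.
  have hI : (1 - mu) * t ^+ m.+3 = Q j by apply: eqI.
  have t0 : t != 0.
    by apply: contra Qn => /eqP t0; rewrite -hI t0 expr0n mulr0.
  have e3 : t ^+ m.+3 = t ^+ 2 * t ^+ m.+1 by rewrite -exprD.
  have h : (1 - mu) * t ^+ 2 = x (j, ord0) * x (ordS j, ord0).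
    apply: (mulIf (x := t ^+ m.+1)); first by rewrite expf_neq0.
    by rewrite -mulrA -e3 hI hQ; ring.
  rewrite sg_opp_of_neg ?mulr0 // -h.
  have : 0 < t ^+ 2 by rewrite exprn_even_gt0 //= t0 orbT.
  move=> ht; nra.
have hsum : (2 - mu) * \sum_j `|x (j, ord0)| ^+ m.+3 = 0.
  rewrite mulr_sumr.
  transitivity (\sum_j Num.sg (x (j, ord0)) * (Q j + Q (ord_pred j))).
    by apply: eq_bigr => j _; rewrite -eqY -normrX normrEsg sgX_odd //; ring.
  under eq_bigr do rewrite mulrDr.
  rewrite big_split /= [X in _ + X](reindex_inj (@ordS_inj r)) /=.
  under [X in _ + X]eq_bigr do rewrite ordSK.
  rewrite -big_split /=; apply: big1 => j _.
  by rewrite -[RHS](edge0 j); ring.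
have y0 : forall j, x (j, ord0) = 0.
  move/eqP: hsum; rewrite mulf_eq0 => /orP[/eqP h|/eqP h]; first lra.
  have H0 := psumr_eq0P (fun i _ => exprn_ge0 m.+3 (normr_ge0 (x (i, ord0)))) h.
  move=> j; have := H0 j isT.
  by move/eqP; rewrite expf_eq0 normr_eq0 => /andP[_ /eqP].
have allz : forall v, x v = 0.
  move=> [j s]; case: (eqVneq (val s) 0%N) => hs.
    by have -> : s = ord0 by apply/val_inj.
  have := eqI j s hs; rewrite decQ y0 !mul0r => /eqP; rewrite mulf_eq0 expf_eq0 /=.
  case/orP => [/eqP h|/eqP //]; lra.
by move: xi0; rewrite allz eqxx.
Qed.
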